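(* Suppose the standing assumptions below hold and $g$ is convex. Let $\bm{x}^{k-1},\bm{x}^k\in C$, $\beta_k\in[0,1)$, and $\bm{y}^k:=\bm{x}^k+\beta_k(\bm{x}^k-\bm{x}^{k-1})\in C$. Let $\hat f_k$ be an auxiliary function of $f$ at $\bm{x}^k$ such that $(\hat f_k,\phi)$ is $L_k$-smad on $C$, let $\lambda_k>0$, and let $$\bm{x}^{k+1}\in\operatorname*{argmin}_{\bm{x}\in\overline C}\Big\{\langle\nabla\hat f_k(\bm{y}^k),\bm{x}-\bm{y}^k\rangle+g(\bm{x})+\tfrac1{\lambda_k}D_\phi(\bm{x},\bm{y}^k)\Big\}$$ with $\bm{x}^{k+1}\in C$. Then $$\lambda_k\Psi(\bm{x}^{k+1})\le\lambda_k\Psi(\bm{x}^k)+(1+\lambda_kL_k)D_\phi(\bm{x}^k,\bm{y}^k)-(1-\lambda_kL_k)D_\phi(\bm{x}^{k+1},\bm{y}^k)-D_\phi(\bm{x}^k,\bm{x}^{k+1}).$$ Furthermore, if $D_\phi(\bm{x}^k,\bm{y}^k)\le\rho\,D_\phi(\bm{x}^{k-1},\bm{x}^k)$ for some $\rho\in(0,1]$ (as guaranteed by the adaptive restart scheme), then for every $M>0$, $$\lambda_k\big(\Psi(\bm{x}^{k+1})+MD_\phi(\bm{x}^k,\bm{x}^{k+1})\big)\le\lambda_k\big(\Psi(\bm{x}^k)+MD_\phi(\bm{x}^{k-1},\bm{x}^k)\big)-(\lambda_kM-\rho(1+\lambda_kL_k))D_\phi(\bm{x}^{k-1},\bm{x}^k)-(1-\lambda_kL_k)D_\phi(\bm{x}^{k+1},\bm{y}^k)-(1-\lambda_kM)D_\phi(\bm{x}^k,\bm{x}^{k+1}).$$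 In particular, if $0<\lambda_kL_k<1$ and $\rho(1+\lambda_kL_k)<\lambda_kM<1$, then $\Psi(\bm{x}^{k+1})+MD_\phi(\bm{x}^k,\bm{x}^{k+1})\le\Psi(\bm{x}^k)+MD_\phi(\bm{x}^{k-1},\bm{x}^k)$.
   Context: Let $C\subset\mathbb{R}^n$ be a nonempty open convex set. A function $\phi:\mathbb{R}^n\to(-\infty,+\infty]$ is a kernel generating distance associated with $C$ (written $\phi\in\mathcal{G}(C)$) if $\phi$ is proper, lower semicontinuous and convex with $\operatorname{dom}\phi\subset\overline{C}$ and $\operatorname{dom}\partial\phi=C$, and $\phi$ is $C^1$ on $\operatorname{int}\operatorname{dom}\phi=C$. The Bregman distance is $D_\phi(\bm{x},\bm{y})=\phi(\bm{x})-\phi(\bm{y})-\langle\nabla\phi(\bm{y}),\bm{x}-\bm{y}\rangle$ for $\bm{x}\in\operatorname{dom}\phi$, $\bm{y}\in C$. For $\phi\in\mathcal{G}(C)$ and $h:\mathbb{R}^n\to(-\infty,+\infty]$ proper, lower semicontinuous, with $\operatorname{dom}\phi\subset\operatorname{dom}h$ and $h$ of class $C^1$ on $C$, the pair $(h,\phi)$ is called $L$-smooth adaptable ($L$-smad) on $C$ if $L>0$ and both $L\phi-h$ and $L\phi+h$ are convex on $C$. Given $\bm{y}\in C$, a function $\hat f:\mathbb{R}^n\to(-\infty,+\infty]$ is an auxiliary function of $f$ at $\bm{y}$ if $\hat f$ is proper, lower semicontinuous, $\operatorname{dom}\phi\subset\operatorname{dom}\hat f$, $\hat f$ is $C^1$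 on $C$, $f(\bm{x})\le\hat f(\bm{x})$ for all $\bm{x}\in C$, $\hat f(\bm{y})=f(\bm{y})$ and $\nabla\hat f(\bm{y})=\nabla f(\bm{y})$. Standing assumptions: the problem is $\min_{\bm{x}\in\overline C}\Psi(\bm{x}):=f(\bm{x})+g(\bm{x})$, where (i) $\phi\in\mathcal{G}(C)$ with $\overline{C}=\overline{\operatorname{dom}\phi}$; (ii) $f:\mathbb{R}^n\to(-\infty,+\infty]$ is proper, lower semicontinuous, $\operatorname{dom}\phi\subset\operatorname{dom}f$, and $f$ is $C^1$ on $C$; (iii) $g:\mathbb{R}^n\to(-\infty,+\infty]$ is proper, lower semicontinuous with $\operatorname{dom}g\cap C\neq\emptyset$; (iv) $\inf_{\overline C}\Psi>-\infty$; (v) $\phi+\lambda g$ is supercoercive for every $\lambda>0$. *)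

(* Defs.v *)
From HB Require Import structures.
From mathcomp Require Import all_boot all_order all_algebra.
From mathcomp Require Import all_classical all_reals all_analysis.
Set Implicit Arguments. Unset Strict Implicit. Unset Printing Implicit Defensive.
Import Order.TTheory GRing.Theory Num.Theory.
Import numFieldNormedType.Exports.
Local Open Scope classical_set_scope.
Local Open Scope ring_scope.

Section Defs.
Variables (R : realType) (n : nat).
Local Notation E := 'rV[R]_n.

Definition dotv (u v : E) : R := \sum_(i < n) u 0 i * v 0 i.
Definition enorm (u : E) : R := Num.sqrt (dotv u u).

Definition dom (f : E -> \bar R) : set E := [set x | (f x < +oo)%E].

Definition proper (f : E -> \bar R) : Prop :=
  (forall x, f x != -oo%E) /\ (exists x, (f x < +oo)%E).

Definition econvex (f : E -> \bar R) : Prop :=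
  forall (x y : E) (t : R), 0 < t -> t < 1 ->
    (f (t *: x + (1 - t) *: y)%R <= (t%:E * f x + (1 - t)%:E * f y)%E)%E.

Definition convex_on (C : set E) (F : E -> R) : Prop :=
  forall (x y : E) (t : R), C x -> C y -> 0 <= t -> t <= 1 ->
    F (t *: x + (1 - t) *: y) <= t * F x + (1 - t) * F y.

Definition convex_setE (C : set E) : Prop :=
  forall (x y : E) (t : R), C x -> C y -> 0 <= t -> t <= 1 ->
    C (t *: x + (1 - t) *: y).

Definition grad (F : E -> R) (x : E) : E :=
  \row_(i < n) ('d F x (delta_mx 0 i : E)).

(* gradient of an extended-real valued function (meaningful where finite) *)
Definition egrad (f : E -> \bar R) (x : E) : E := grad (fun z => fine (f z)) x.

Definition C1_on (C : set E) (f : E -> \bar R) : Prop :=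
  (forall x, C x -> f x \is a fin_num) /\
  (forall x, C x -> differentiable (fun z => fine (f z)) x) /\
  (forall x, C x -> {for x, continuous (egrad f)}).

Definition subdiff (f : E -> \bar R) (x : E) : set E :=
  [set v | f x \is a fin_num /\
           forall z, (f x + (dotv v (z - x)%R)%:E <= f z)%E].
Definition dom_subdiff (f : E -> \bar R) : set E :=
  [set x | exists v, subdiff f x v].

Definition kernel_gen_dist (C : set E) (phi : E -> \bar R) : Prop :=
  proper phi /\ lower_semicontinuous phi /\ econvex phi /\
  dom phi `<=` closure C /\ dom_subdiff phi = C /\
  interior (dom phi) = C /\ C1_on C phi.

Definition bregE (phi : E -> \bar R) (x y : E) : \bar R :=
  (phi x + (- fine (phi y) - dotv (egrad phi y) (x - y))%R%:E)%E.
(* Bregman distance as a real number, for x in dom phi and y in C *)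
Definition breg (phi : E -> \bar R) (x y : E) : R :=
  fine (phi x) - fine (phi y) - dotv (egrad phi y) (x - y).

Definition smad (C : set E) (h phi : E -> \bar R) (L : R) : Prop :=
  0 < L /\
  convex_on C (fun x => L * fine (phi x) - fine (h x)) /\
  convex_on C (fun x => L * fine (phi x) + fine (h x)).

Definition auxiliary (C : set E) (phi f fh : E -> \bar R) (y : E) : Prop :=
  proper fh /\ lower_semicontinuous fh /\ dom phi `<=` dom fh /\
  C1_on C fh /\ (forall x, C x -> (f x <= fh x)%E) /\
  fh y = f y /\ egrad fh y = egrad f y.

Definition supercoercive (psi : E -> \bar R) : Prop :=
  forall M : R, exists r : R, forall x, r <= enorm x ->
    ((M * enorm x)%:E <= psi x)%E.

Definition standing (C : set E) (phi f g : E -> \bar R) : Prop :=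
  [/\ kernel_gen_dist C phi /\ closure C = closure (dom phi),
      proper f /\ lower_semicontinuous f /\ dom phi `<=` dom f /\ C1_on C f,
      proper g /\ lower_semicontinuous g /\ (exists x, dom g x /\ C x),
      (exists m : R, forall x, closure C x -> (m%:E <= f x + g x)%E) &
      (forall lam : R, 0 < lam -> supercoercive (fun x => phi x + lam%:E * g x)%E)].

End Defs.

(* Main.v *)
Set Warnings "-all".
Require Import Defs.
From HB Require Import structures.
From mathcomp Require Import all_boot all_order all_algebra.
From mathcomp Require Import all_classical all_reals all_analysis.
Import Order.TTheory GRing.Theory Num.Theory.
Import numFieldNormedType.Exports.
Local Open Scope classical_set_scope.
From mathcomp Require Import ring lra.
Local Open Scope ring_scope.


Lemma dotv_grad {R : realType} {n : nat} (P : 'rV[R]_n -> R) x v : dotv (grad P x) v = 'd P x v.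
Proof.
rewrite /dotv /grad.
rewrite [in RHS](matrix_sum_delta v) linear_sum /=.
rewrite big_ord1 linear_sum /=; apply: eq_bigr => i _.
by rewrite mxE linearZ /= mulrC.
Qed.

Lemma dq_cvg {R : realType} {n : nat} (P : 'rV[R]_n -> R) x v : differentiable P x ->
  (fun t => t^-1 * (P (x + t *: v) - P x)) @ 0^'+ --> dotv (grad P x) v.
Proof.
move=> dP; rewrite dotv_grad -deriveE //.
have : derivable P x v by apply: diff_derivable.
rewrite /derivable => /cvg_ex [l Hl].
have -> : (fun t => t^-1 * (P (x + t *: v) - P x)) =
   (fun h => h^-1 *: ((P \o shift x) (h *: v) - P x)).
  by apply/funext => h /=; rewrite [x + _]addrC.
rewrite /derive (cvg_lim _ Hl) //.
exact: cvg_dnbhs_at_right Hl.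
Qed.

Lemma lim_lb {R : realType} (u : R -> R) l c : u @ 0^'+ --> l ->
  (forall t, 0 < t -> t < 1 -> c <= u t) -> c <= l.
Proof.
move=> ul H.
have : \forall t \near 0^'+, c <= u t.
  near=> t; apply: H; [by near: t; exact: nbhs_right_gt|].
  by near: t; apply: nbhs_right_lt; exact: ltr01.
move=> Hn.
exact: (@closed_cvg _ _ _ (at_right_proper_filter 0) u _ (closed_ge (y:=c)) Hn l ul).
Unshelve. all: by end_near. Qed.

Lemma lim_ub {R : realType} (u : R -> R) l c : u @ 0^'+ --> l ->
  (forall t, 0 < t -> t < 1 -> u t <= c) -> l <= c.
Proof.
move=> ul H.
have : \forall t \near 0^'+, u t <= c.
  near=> t; apply: H; [by near: t; exact: nbhs_right_gt|].
  by near: t; apply: nbhs_right_lt; exact: ltr01.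
move=> Hn.
exact: (@closed_cvg _ _ _ (at_right_proper_filter 0) u _ (closed_le (y:=c)) Hn l ul).
Unshelve. all: by end_near. Qed.

Lemma seg_eq {R : realType} {n : nat} (x z : 'rV[R]_n) (t : R) : x + t *: (z - x) = t *: z + (1 - t) *: x.
Proof. apply/rowP => i; rewrite !mxE; ring. Qed.

Lemma dotv_lin {R : realType} {n : nat} (a u w : 'rV[R]_n) (s : R) : dotv a (s *: u + w) = s * dotv a u + dotv a w.
Proof.
rewrite /dotv mulr_sumr -big_split /=; apply: eq_bigr => i _.
by rewrite !mxE mulrDr mulrCA.
Qed.

Lemma dotv_split {R : realType} {n : nat} (a x z y : 'rV[R]_n) : dotv a (x - z) = dotv a (x - y) - dotv a (z - y).
Proof.
rewrite /dotv -sumrB; apply: eq_bigr => i _.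
rewrite !mxE; set A := a 0 i; set X := x 0 i; set Y := z 0 i; set Z := y 0 i.
have -> : A * (X - Y) = A * (X - Z) - A * (Y - Z) by ring.
done.
Qed.

Lemma dotv_seg {R : realType} {n : nat} (a xk x1 y : 'rV[R]_n) (t : R) :
  dotv a (t *: xk + (1 - t) *: x1 - y) = dotv a (x1 - y) + t * dotv a (xk - x1).
Proof.
rewrite /dotv mulr_sumr -big_split /=; apply: eq_bigr => i _.
rewrite !mxE; set A := a 0 i; set X := xk 0 i; set Y := x1 0 i; set Z := y 0 i.
have -> : A * (t * X + (1 - t) * Y - Z) = A * (Y - Z) + t * (A * (X - Y)) by ring.
done.
Qed.

Lemma cvx_grad {R : realType} {n : nat} (F : 'rV[R]_n -> R) x z d :
  (forall t, 0 < t -> t < 1 -> F (t *: z + (1 - t) *: x) <= t * F z + (1 - t) * F x) ->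
  (fun t => t^-1 * (F (x + t *: (z - x)) - F x)) @ 0^'+ --> d -> d <= F z - F x.
Proof.
move=> Hc Hd; apply: (@lim_ub _ _ _ _ Hd) => t t0 t1.
rewrite ler_pdivrMl // seg_eq.
have := Hc t t0 t1; lra.
Qed.

Lemma arithB {R : realType} (L P1 Py H1 Hy dP dH : R) :
  L * dP - dH <= (L * P1 - H1) - (L * Py - Hy) -> H1 <= Hy + dH + L * (P1 - Py - dP).
Proof. rewrite !mulrBr; lra. Qed.

Lemma arithC {R : realType} (L P1 Py H1 Hy dP dH : R) :
  L * dP + dH <= (L * P1 + H1) - (L * Py + Hy) -> Hy + dH - L * (P1 - Py - dP) <= H1.
Proof. rewrite !mulrBr; lra. Qed.

Lemma arithA {R : realType} (lam t G1 Gk Gt d1 A P1 Py Pt e1 Ek : R) : 0 < lam -> 0 < t ->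
 d1 + G1 + lam^-1 * (P1 - Py - e1) <= (d1 + t * A) + Gt + lam^-1 * (Pt - Py - (e1 + t * Ek)) ->
 Gt <= t * Gk + (1 - t) * G1 ->
 lam * (G1 - Gk - A) + Ek <= t^-1 * (Pt - P1).
Proof.
move=> l0 t0 h1 h2; rewrite ler_pdivlMl //.
move: h1; set X1 := P1 - Py - e1; set X2 := Pt - Py - (e1 + t * Ek) => h1.
have h1' := ler_wpM2l (ltW l0) h1.
rewrite !mulrDr !mulrA mulfV ?gt_eqF // !mul1r in h1'.
have h2' := ler_wpM2l (ltW l0) h2.
rewrite /X1 /X2 in h1'; lra.
Qed.

Lemma arithA' {R : realType} (lam t G1 Gk Gt d1 A P1 Py Pt e1 Ek dt et : R) : 0 < lam -> 0 < t ->
 dt = d1 + t * A -> et = e1 + t * Ek ->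
 d1 + G1 + lam^-1 * (P1 - Py - e1) <= dt + Gt + lam^-1 * (Pt - Py - et) ->
 Gt <= t * Gk + (1 - t) * G1 ->
 lam * (G1 - Gk - A) + Ek <= t^-1 * (Pt - P1).
Proof. by move=> l0 t0 -> ->; apply: arithA. Qed.

Lemma arith1 {R : realType} (lam L F1 G1 Fk Gk H1 Hy Hk a1 ak e1 ek P1 Pk Py Q : R) :
  0 < lam ->
  lam * (G1 - Gk - (ak - a1)) + (ek - e1) <= Q ->
  H1 <= Hy + a1 + L * (P1 - Py - e1) ->
  Hy + ak - L * (Pk - Py - ek) <= Hk -> F1 <= H1 -> Hk = Fk ->
  lam * (F1 + G1) <= lam * (Fk + Gk) + ((1 + lam * L) * (Pk - Py - ek)
     - (1 - lam * L) * (P1 - Py - e1) - (Pk - P1 - Q)).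
Proof.
move=> l0 hA hB hC hF hH.
have hX : F1 + Hy + ak - L * (Pk - Py - ek) <= Fk + Hy + a1 + L * (P1 - Py - e1) by lra.
have := ler_wpM2l (ltW l0) hX.
move=> h; lra.
Qed.

Lemma arith1' {R : realType} (lam L F1 G1 Fk Gk H1 Hy Hk a1 ak e1 ek P1 Pk Py Q A Ek : R) :
  0 < lam -> A = ak - a1 -> Ek = ek - e1 ->
  lam * (G1 - Gk - A) + Ek <= Q ->
  H1 <= Hy + a1 + L * (P1 - Py - e1) ->
  Hy + ak - L * (Pk - Py - ek) <= Hk -> F1 <= H1 -> Hk = Fk ->
  lam * (F1 + G1) <= lam * (Fk + Gk) + ((1 + lam * L) * (Pk - Py - ek)
     - (1 - lam * L) * (P1 - Py - e1) - (Pk - P1 - Q)).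
Proof. by move=> l0 -> ->; apply: arith1. Qed.

Lemma arith2 {R : realType} (lam L rho M X Y Dky D1y Dk1 Dm : R) :
  0 < lam -> 0 < L ->
  lam * X <= lam * Y + ((1 + lam * L) * Dky - (1 - lam * L) * D1y - Dk1) ->
  Dky <= rho * Dm ->
  lam * (X + M * Dk1) <= lam * (Y + M * Dm) +
   (- (lam * M - rho * (1 + lam * L)) * Dm - (1 - lam * L) * D1y - (1 - lam * M) * Dk1).
Proof.
move=> l0 L0 h1 h2.
have hp : 0 <= 1 + lam * L by have := mulr_gt0 l0 L0; lra.
have := ler_wpM2l hp h2; move=> h3; lra.
Qed.

Lemma arith3 {R : realType} (lam L rho M X Y D1y Dk1 Dm : R) :
  0 < lam -> 0 <= D1y -> 0 <= Dk1 -> 0 <= Dm ->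
  lam * L < 1 -> rho * (1 + lam * L) < lam * M -> lam * M < 1 ->
  lam * (X + M * Dk1) <= lam * (Y + M * Dm) +
   (- (lam * M - rho * (1 + lam * L)) * Dm - (1 - lam * L) * D1y - (1 - lam * M) * Dk1) ->
  X + M * Dk1 <= Y + M * Dm.
Proof.
move=> l0 d1 d2 d3 c1 c2 c3 h.
have e1 : 0 <= (lam * M - rho * (1 + lam * L)) * Dm by apply: mulr_ge0 => //; lra.
have e2 : 0 <= (1 - lam * L) * D1y by apply: mulr_ge0 => //; lra.
have e3 : 0 <= (1 - lam * M) * Dk1 by apply: mulr_ge0 => //; lra.
rewrite -(ler_pM2l l0); lra.
Qed.

Theorem mainTheorem3 (R : realType) (n : nat) (C : set 'rV[R]_n)
  (phi f g : 'rV[R]_n -> \bar R)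
  (xkm1 xk xk1 : 'rV[R]_n) (beta : R) (fh : 'rV[R]_n -> \bar R) (L lam : R) :
  open C -> convex_setE C -> C !=set0 ->
  standing C phi f g ->
  econvex g ->
  C xkm1 -> C xk -> 0 <= beta -> beta < 1 ->
  let yk := xk + beta *: (xk - xkm1) in
  C yk ->
  auxiliary C phi f fh xk ->
  smad C fh phi L ->
  0 < lam ->
  closure C xk1 ->
  (forall x, closure C x ->
     ((dotv (egrad fh yk) (xk1 - yk))%:E + g xk1 + lam^-1%:E * bregE phi xk1 yk
      <= (dotv (egrad fh yk) (x - yk))%:E + g x + lam^-1%:E * bregE phi x yk)%E) ->
  C xk1 ->
  let Psi := (fun x => f x + g x)%E in
  (lam%:E * Psi xk1 <= lam%:E * Psi xk
     + ((1 + lam * L) * breg phi xk yk - (1 - lam * L) * breg phi xk1 yk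
        - breg phi xk xk1)%:E)%E /\
  (forall rho : R, 0 < rho -> rho <= 1 ->
     breg phi xk yk <= rho * breg phi xkm1 xk ->
     forall M : R, 0 < M ->
     (lam%:E * (Psi xk1 + (M * breg phi xk xk1)%:E)
       <= lam%:E * (Psi xk + (M * breg phi xkm1 xk)%:E)
          + (- (lam * M - rho * (1 + lam * L)) * breg phi xkm1 xk
             - (1 - lam * L) * breg phi xk1 yk
             - (1 - lam * M) * breg phi xk xk1)%:E)%E) /\
  (forall rho : R, 0 < rho -> rho <= 1 ->
     breg phi xk yk <= rho * breg phi xkm1 xk ->
     forall M : R, 0 < M ->
     0 < lam * L -> lam * L < 1 ->
     rho * (1 + lam * L) < lam * M -> lam * M < 1 ->
     (Psi xk1 + (M * breg phi xk xk1)%:E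
       <= Psi xk + (M * breg phi xkm1 xk)%:E)%E).

Proof.
move=> oC cvxC neC [[KG Hcl] [pf [lsf [domf C1f]]] [pg [lsg exg]] bnd sup] cvxg
  Cm Ck b0 b1 yk Cy aux sm lam0 clx1 opt Cx1 Psi.
case: KG => pphi [lscphi [cvxphi [domcl [dsub [intd C1phi]]]]].
case: C1phi => finphi [diffphi _].
case: aux => pfh [_ [_ [[finfh [difffh _]] [fle [fhe _]]]]].
case: sm => L0 [cvm cvp].
case: C1f => finf _.
set P := fun z => fine (phi z).
set H := fun z => fine (fh z).
have phiE z : C z -> phi z = (P z)%:E by move=> Cz; rewrite /P fineK // finphi.
have fhE z : C z -> fh z = (H z)%:E by move=> Cz; rewrite /H fineK // finfh.
have fE z : C z -> f z = (fine (f z))%:E by move=> Cz; rewrite fineK // finf.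
have bregEE z : C z -> bregE phi z yk = (breg phi z yk)%:E.
  by move=> Cz; rewrite /bregE /breg phiE // -EFinD addrA.
have bnn x z : C x -> C z -> 0 <= breg phi x z.
  move=> Cx Cz.
  have Hc : forall t, 0 < t -> t < 1 ->
      P (t *: x + (1 - t) *: z) <= t * P x + (1 - t) * P z.
    move=> t t0 t1.
    have Ct : C (t *: x + (1 - t) *: z) by apply: cvxC => //; lra.
    have := cvxphi x z t t0 t1.
    by rewrite !phiE // -!EFinM -EFinD lee_fin.
  have := @cvx_grad _ _ P z x _ Hc (@dq_cvg _ _ P z (x - z) (diffphi z Cz)).
  rewrite /breg /egrad -/P -/(P x) -/(P z); lra.
have HB : H xk1 <= H yk + dotv (egrad fh yk) (xk1 - yk) + L * breg phi xk1 yk.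
  pose Fm := fun z => L * P z - H z.
  have Hc : forall t, 0 < t -> t < 1 ->
      Fm (t *: xk1 + (1 - t) *: yk) <= t * Fm xk1 + (1 - t) * Fm yk.
    move=> t t0 t1; exact: (cvm xk1 yk t Cx1 Cy (ltW t0) (ltW t1)).
  have Hd : (fun t => t^-1 * (Fm (yk + t *: (xk1 - yk)) - Fm yk)) @ 0^'+ -->
      L * dotv (grad P yk) (xk1 - yk) - dotv (grad H yk) (xk1 - yk).
    have -> : (fun t => t^-1 * (Fm (yk + t *: (xk1 - yk)) - Fm yk)) =
      (fun t => L * (t^-1 * (P (yk + t *: (xk1 - yk)) - P yk))
                - t^-1 * (H (yk + t *: (xk1 - yk)) - H yk)).
      by apply/funext => t; rewrite /Fm; ring.
    have h1 := @dq_cvg _ _ P yk (xk1 - yk) (diffphi yk Cy).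
    have h2 := @dq_cvg _ _ H yk (xk1 - yk) (difffh yk Cy).
    apply: cvgB => //; apply: cvgMl_tmp; exact: h1.
  have := @cvx_grad _ _ Fm yk xk1 _ Hc Hd.
  rewrite /breg /egrad -/P -/H -/(P xk1) -/(P yk) /Fm; exact: arithB.
have HC : H yk + dotv (egrad fh yk) (xk - yk) - L * breg phi xk yk <= H xk.
  pose Fm := fun z => L * P z + H z.
  have Hc : forall t, 0 < t -> t < 1 ->
      Fm (t *: xk + (1 - t) *: yk) <= t * Fm xk + (1 - t) * Fm yk.
    move=> t t0 t1; exact: (cvp xk yk t Ck Cy (ltW t0) (ltW t1)).
  have Hd : (fun t => t^-1 * (Fm (yk + t *: (xk - yk)) - Fm yk)) @ 0^'+ -->
      L * dotv (grad P yk) (xk - yk) + dotv (grad H yk) (xk - yk).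
    have -> : (fun t => t^-1 * (Fm (yk + t *: (xk - yk)) - Fm yk)) =
      (fun t => L * (t^-1 * (P (yk + t *: (xk - yk)) - P yk))
                + t^-1 * (H (yk + t *: (xk - yk)) - H yk)).
      by apply/funext => t; rewrite /Fm; ring.
    have h1 := @dq_cvg _ _ P yk (xk - yk) (diffphi yk Cy).
    have h2 := @dq_cvg _ _ H yk (xk - yk) (difffh yk Cy).
    apply: cvgD => //; apply: cvgMl_tmp; exact: h1.
  have := @cvx_grad _ _ Fm yk xk _ Hc Hd.
  rewrite /breg /egrad -/P -/H -/(P xk) -/(P yk) /Fm; exact: arithC.
have gnm z : (g z != -oo)%E by case: pg => + _; apply.
have fkE := fE xk Ck.
case: (eqVneq (g xk) +oo%E) => [gkoo|gkn].
  have PsikE : Psi xk = +oo%E by rewrite /Psi gkoo fkE addey.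
  have lamoo : (lam%:E * +oo = +oo)%E by rewrite mulry gtr0_sg // mul1e.
  split; [|split].
  - by rewrite PsikE lamoo addye // leey.
  - move=> rho _ _ _ M _; by rewrite PsikE addye // lamoo addye // leey.
  - move=> rho _ _ _ M _ _ _ _ _; by rewrite PsikE addye // leey.
have gkE : g xk = (fine (g xk))%:E by rewrite fineK // fin_numE gnm gkn.
set Gk := fine (g xk).
have g1n : (g xk1 != +oo)%E.
  apply/eqP => g1oo; move: (opt xk (subset_closure Ck)).
  by rewrite g1oo !bregEE // gkE -!EFinM addey // addye // -!EFinD.
have g1E : g xk1 = (fine (g xk1))%:E by rewrite fineK // fin_numE gnm g1n.
set G1 := fine (g xk1).
set a := egrad fh yk.
have HA : lam * (G1 - Gk - dotv a (xk - xk1)) + dotv (grad P yk) (xk - xk1)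
          <= dotv (grad P xk1) (xk - xk1).
  apply: (@lim_lb _ _ _ _ (@dq_cvg _ _ P xk1 (xk - xk1) (diffphi xk1 Cx1))) => t t0 t1.
  rewrite seg_eq; set xt := t *: xk + (1 - t) *: xk1.
  have Ct : C xt by apply: cvxC => //; lra.
  have gt := cvxg xk xk1 t t0 t1; rewrite -/xt in gt.
  rewrite gkE g1E -!EFinM -EFinD in gt.
  have gtn : (g xt != +oo)%E.
    by apply/eqP => hh; move: gt; rewrite hh leye_eq.
  have gtE : g xt = (fine (g xt))%:E.
    by rewrite fineK // fin_numE gnm gtn.
  have op := opt _ (subset_closure Ct).
  rewrite g1E gtE !bregEE // -!EFinM -!EFinD lee_fin in op.
  rewrite gtE lee_fin in gt.
  move: op; rewrite /breg /egrad -/P -/(P xk1) -/(P yk) -/(P xt).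
  have e1 : dotv (grad P yk) (xt - yk) = dotv (grad P yk) (xk1 - yk) + t * dotv (grad P yk) (xk - xk1)
    by exact: dotv_seg.
  have e2 : dotv (egrad fh yk) (xt - yk) = dotv (egrad fh yk) (xk1 - yk) + t * dotv (egrad fh yk) (xk - xk1)
    by exact: dotv_seg.
  move=> op.
  exact: (@arithA' _ _ _ _ _ _ _ _ _ _ _ _ _ _ _ lam0 t0 e2 e1 op gt).
have f1E := fE xk1 Cx1.
set F1 := fine (f xk1).
set Fk := fine (f xk).
have hF : F1 <= H xk1 by have := fle xk1 Cx1; rewrite f1E fhE // lee_fin.
have hH : H xk = Fk by rewrite /H fhe.
have s1 : dotv a (xk - xk1) = dotv a (xk - yk) - dotv a (xk1 - yk) by exact: dotv_split.
have s2 : dotv (grad P yk) (xk - xk1) = dotv (grad P yk) (xk - yk) - dotv (grad P yk) (xk1 - yk)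
  by exact: dotv_split.
have R1 : lam * (F1 + G1) <= lam * (Fk + Gk) + ((1 + lam * L) * breg phi xk yk
     - (1 - lam * L) * breg phi xk1 yk - breg phi xk xk1).
  exact: (@arith1' _ _ _ _ _ _ _ _ _ _ _ _ _ _ _ _ _ _ _ _ lam0 s1 s2 HA HB HC hF hH).
have Psi1E : Psi xk1 = (F1 + G1)%:E by rewrite /Psi f1E g1E.
have PsikE : Psi xk = (Fk + Gk)%:E by rewrite /Psi fkE gkE.
have R2 : forall rho : R, breg phi xk yk <= rho * breg phi xkm1 xk ->
   forall M : R,
   lam * ((F1 + G1) + M * breg phi xk xk1) <= lam * ((Fk + Gk) + M * breg phi xkm1 xk) +
   (- (lam * M - rho * (1 + lam * L)) * breg phi xkm1 xk - (1 - lam * L) * breg phi xk1 yk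
    - (1 - lam * M) * breg phi xk xk1).
  move=> rho hr M; exact: (@arith2 _ _ _ _ _ _ _ _ _ _ _ lam0 L0 R1 hr).
split; [|split].
- by rewrite Psi1E PsikE -!EFinM -EFinD lee_fin.
- move=> rho _ _ hr M _.
  by rewrite Psi1E PsikE -!EFinD -!EFinM -?EFinD lee_fin; apply: R2.
- move=> rho _ _ hr M _ _ c1 c2 c3.
  rewrite Psi1E PsikE -!EFinD lee_fin.
  exact: (@arith3 _ _ _ _ _ _ _ _ _ _ lam0 (bnn _ _ Cx1 Cy) (bnn _ _ Ck Cx1)
            (bnn _ _ Cm Ck) c1 c2 c3 (R2 rho hr M)).
Qed.
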